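(* If a graph $G$ contains a bad attachment $\Gamma$ with $V(\Gamma)\ne V(G)$, then $G\notin\mathcal{S}_3$.
   Context: Graphs may have parallel edges but no loops. A bad attachment of $G$ is an induced subgraph $\Gamma$ with $3\le|V(\Gamma)|\le 6$ such that the number of edges of $G$ between $V(\Gamma)$ and $V(G)\setminus V(\Gamma)$ is at most $3|V(\Gamma)|-|E(\Gamma)|$. $G\in\mathcal{S}_3$ means: for every $\beta:V(G)\to\mathbb{Z}_3$ with $\sum_v\beta(v)\equiv0\pmod3$ there is a strongly-connected orientation $D$ of $G$ with $d^+_D(v)-d^-_D(v)\equiv\beta(v)\pmod3$ for all $v$. *)

(* Defs.v *)
From HB Require Import structures.
From mathcomp Require Import all_boot all_order all_algebra.
Set Implicit Arguments. Unset Strict Implicit. Unset Printing Implicit Defensive.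
Import GRing.Theory.

(* A finite multigraph (parallel edges allowed) on vertex type V with edge
   type E: each edge e has endpoints (tail0 e, head0 e) in a fixed reference
   direction. Loops are excluded by the hypothesis [loopless]. *)
Record multigraph (V E : finType) := Multigraph {
  ends : E -> V * V
}.

Definition loopless (V E : finType) (G : multigraph V E) : Prop :=
  forall e : E, (ends G e).1 != (ends G e).2.

(* An orientation assigns to each edge a direction:
   D e = true  means e is oriented (ends e).1 -> (ends e).2,
   D e = false means e is oriented (ends e).2 -> (ends e).1. *)
Definition orientation (E : finType) := E -> bool.

Definition otail (V E : finType) (G : multigraph V E) (D : orientation E) (e : E) : V :=
  if D e then (ends G e).1 else (ends G e).2.
Definition ohead (V E : finType) (G : multigraph V E) (D : orientation E) (e : E) : V :=
  if D e then (ends G e).2 else (ends G e).1.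

Definition outdeg (V E : finType) (G : multigraph V E) (D : orientation E) (v : V) : nat :=
  #|[set e | otail G D e == v]|.
Definition indeg (V E : finType) (G : multigraph V E) (D : orientation E) (v : V) : nat :=
  #|[set e | ohead G D e == v]|.

Definition arc (V E : finType) (G : multigraph V E) (D : orientation E) : rel V :=
  fun u w => [exists e, (otail G D e == u) && (ohead G D e == w)].

Definition strongly_connected (V E : finType) (G : multigraph V E) (D : orientation E) : Prop :=
  forall u w : V, connect (arc G D) u w.

Definition in_S3 (V E : finType) (G : multigraph V E) : Prop :=
  forall beta : V -> 'Z_3, (\sum_(v : V) beta v = 0)%R ->
    exists D : orientation E, strongly_connected G D /\
      forall v, ((outdeg G D v)%:R - (indeg G D v)%:R : 'Z_3)%R = beta v.

Definition inner_edges (V E : finType) (G : multigraph V E) (S : {set V}) : {set E} :=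
  [set e | ((ends G e).1 \in S) && ((ends G e).2 \in S)].
Definition cut_edges (V E : finType) (G : multigraph V E) (S : {set V}) : {set E} :=
  [set e | ((ends G e).1 \in S) (+) ((ends G e).2 \in S)].

(* Induced subgraph G[S] is a bad attachment: 3 <= |S| <= 6 and
   |cut| <= 3|S| - |E(G[S])| (over the integers; written additively). *)
Definition bad_attachment (V E : finType) (G : multigraph V E) (S : {set V}) : Prop :=
  [/\ 3 <= #|S|, #|S| <= 6 &
      #|cut_edges G S| + #|inner_edges G S| <= 3 * #|S|]%N.

(* Main.v *)
Require Import Defs.
From mathcomp Require Import all_boot all_order all_algebra.
From mathcomp Require Import zify ring.

Lemma cardsum (T : finType) (P : pred T) :
  #|[set x | P x]| = (\sum_x (P x : nat))%N.
Proof.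
rewrite -sum1_card big_mkcond /=; apply: eq_bigr => x _; rewrite inE; by case: (P x).
Qed.

Lemma cross (T : finType) (r : rel T) (a : pred T) x y :
  connect r x y -> a x -> ~~ a y -> exists u u', [/\ r u u', a u & ~~ a u'].
Proof.
move=> /connectP [p Hp ->]; elim: p x Hp => [|z p IH] x /=.
  by move=> _ ->.
move=> /andP [Hxz Hp] ax.
case az: (a z).
  by apply: IH.
by move=> _; exists x, z; rewrite Hxz ax az.
Qed.

Lemma sum_eqS (V : finType) (S : {set V}) (x : V) :
  (\sum_(v in S) (x == v : nat))%N = (x \in S).
Proof.
case xS: (x \in S).
  rewrite (bigD1 x) //= eqxx big1 // => v /andP [_ H]; by rewrite eq_sym (negPf H).
by rewrite big1 // => v vS; case: eqP => // E; rewrite E vS in xS.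
Qed.

Theorem mainTheorem8 (V E : finType) (G : multigraph V E) (S : {set V}) :
  loopless G -> bad_attachment G S -> S != [set: V] -> ~ in_S3 G.
Proof.
move=> _ [H3 _ Hb] HS HG.
have [w0 w0S] : exists w0, w0 \notin S.
  case: (pickP (fun x => x \notin S)) => [w Hw|H]; first by exists w.
  by case/eqP: HS; apply/setP => x; rewrite inE; move: (H x) => /= /negbFE.
pose deg v := (\sum_e (nat_of_bool ((ends G e).1 == v) + nat_of_bool ((ends G e).2 == v)))%N.
pose K := (\sum_(v in S) (deg v)%:R : 'Z_3)%R.
pose beta := fun v => ((if v \in S then (deg v)%:R else 0) +
                       (if v == w0 then - K else 0) : 'Z_3)%R.
have Hsum : (\sum_v beta v = 0)%R.
  rewrite big_split /= -big_mkcond /= -big_mkcond /= big_pred1_eq.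
  by rewrite GRing.subrr.
have [D [SC HD]] := HG beta Hsum.
(* each vertex of S has in-degree divisible by 3 *)
have Hin : forall v, v \in S -> (3 <= indeg G D v)%N.
  move=> v vS.
  have Hod : (outdeg G D v + indeg G D v = deg v)%N.
    rewrite /outdeg /indeg !cardsum -big_split /=; apply: eq_bigr => e _.
    rewrite /otail /Defs.ohead; case: (D e) => //=; by rewrite addnC.
  have := HD v; rewrite /beta vS ifF; last by apply/negP => /eqP Ew; rewrite -Ew vS in w0S.
  rewrite GRing.addr0 -Hod GRing.natrD => Heq.
  have H2 : (((indeg G D v + indeg G D v)%N%:R : 'Z_3) = 0)%R.
    rewrite GRing.natrD.
    have -> : (((indeg G D v)%:R + (indeg G D v)%:R : 'Z_3) =
      ((outdeg G D v)%:R + (indeg G D v)%:R) - ((outdeg G D v)%:R - (indeg G D v)%:R))%R by ring.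
    by rewrite Heq GRing.subrr.
  move: H2 => /(congr1 (@nat_of_ord _)); rewrite (val_Zp_nat (p:=3)) //= => Hm.
  have : (0 < indeg G D v)%N.
    have aw : w0 != v by apply/eqP => Ew; rewrite Ew vS in w0S.
    have := @cross _ _ (fun z => z != v) _ _ (SC w0 v) aw; rewrite /= eqxx.
    move=> /(_ isT) [u [u' [/existsP [e /andP [_ He]] _ Hu']]].
    move: Hu' => /negbNE /eqP Hu'; subst u'.
    by apply/card_gt0P; exists e; rewrite inE.
  lia.
have [v0 v0S] : exists v0, v0 \in S by apply/card_gt0P; apply: leq_trans H3.
have := @cross _ _ (fun z => z \in S) _ _ (SC v0 w0) v0S w0S.
move=> [u [u' [/existsP [e0 /andP [/eqP Ht /eqP Hh]] uS u'S]]].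
have L1 : (3 * #|S| <= \sum_(v in S) indeg G D v)%N.
  rewrite mulnC -sum_nat_const; apply: leq_sum => v vS; exact: Hin.
have L2 : (\sum_(v in S) indeg G D v =
           \sum_e nat_of_bool (Defs.ohead G D e \in S))%N.
  rewrite /indeg; under eq_bigr do rewrite cardsum.
  rewrite exchange_big /=; apply: eq_bigr => e _; exact: sum_eqS.
have L3 : (\sum_e nat_of_bool (Defs.ohead G D e \in S) <
   #|cut_edges G S| + #|inner_edges G S|)%N.
  rewrite /cut_edges /inner_edges !cardsum -big_split /=.
  rewrite (bigD1 e0) //= [X in (_ < X)%N](bigD1 e0) //=.
  rewrite Hh (negPf u'S).
  have Hc : ((ends G e0).1 \in S) (+) ((ends G e0).2 \in S).
    move: Ht Hh uS u'S; rewrite /otail /Defs.ohead; case: (D e0) => <- <- -> /negPf -> //.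
  rewrite Hc add0n -addnA add1n ltnS; apply: leq_trans (leq_addl _ _).
  apply: leq_sum => e _.
  rewrite /Defs.ohead; case: (D e); case: ((ends G e).1 \in S); case: ((ends G e).2 \in S) => //.
lia.
Qed.
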